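(* Let $F$, $H$, $X$, $\Omega$, $Q$ and the sequences generated by the IneIREG method be as described in the context, and assume $H$ is $\mu$-strongly monotone for some $\mu>0$. Let $\varepsilon>0$, let $\mathcal D_0>\varepsilon$ satisfy $\mathcal D_0\ge\overline\lambda C_HD_X/\underline\lambda$, and suppose $\eta_k\equiv\eta:=\varepsilon/(2\mathcal D_0)$ for all $k\ge0$; $\lambda_k\in[\underline\lambda,\overline\lambda]$ for all $k\ge0$ with $0<\underline\lambda\le\overline\lambda<1/L$, where $L:=L_F+\eta L_H$; and $\alpha_0\in[0,1]$ and $\alpha_{k+1}\le(1-\beta_k)\alpha_k$ for all $k\ge0$, where $\beta_k:=\big(\frac{1}{1-\lambda_k^2L^2}+\frac{1}{2\lambda_k\eta\mu}\big)^{-1}$. Define $p_{-1}:=1$, $p_k:=\big(\prod_{i=0}^k(1-\beta_i)\big)^{-1}$ for $k\ge0$, and for $k\ge1$, $\Lambda_k:=\sum_{j=0}^{k-1}\lambda_j\eta p_j$ and $\overline y_k:=\Lambda_k^{-1}\sum_{j=0}^{k-1}\lambda_j\eta p_jy_j$. Then for all $k\ge1$ satisfying $$k\ge\Big\lceil\Big(\frac{1}{1-\overline\lambda^2L^2}+\frac{\mathcal D_0}{\underline\lambda\mu\varepsilon}\Big)\log\Big(\frac{2(k+1)D_X^2\mathcal D_0}{\underline\lambda\varepsilon^2}\Big)\Big\rceil$$ we have $-B_H\,\mathrm{dist}(\overline y_k,Q)\le\mathrm{Gap}(\overline y_k,H,Q)\le\varepsilon$ and $0\le\mathrm{Gap}(\overline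 y_k,F,X)\le\varepsilon$; moreover, if $Q$ is $\sigma$-weakly sharp of order $\mathcal M\ge1$, then $\mathrm{Gap}(\overline y_k,H,Q)\ge-\big(B_H/\sigma^{1/\mathcal M}\big)\varepsilon^{1/\mathcal M}$ for such $k$.
   Context: Work in $\mathbb{R}^n$ with Euclidean inner product $\langle\cdot,\cdot\rangle$ and norm $\|\cdot\|$. The maps $F\colon \mathrm{Dom}\,F\to\mathbb{R}^n$ and $H\colon\mathrm{Dom}\,H\to\mathbb{R}^n$ are monotone and Lipschitz continuous with constants $L_F>0$ and $L_H>0$; $H$ is $\mu$-strongly monotone means $\langle H(x)-H(y),x-y\rangle\ge\mu\|x-y\|^2$ for all $x,y\in\mathrm{Dom}\,H$. $X$ is a nonempty compact convex set and $\Omega$ a nonempty closed convex set with $X\subset\Omega\subset\mathrm{Dom}\,F\cap\mathrm{Dom}\,H$; $P_X,P_\Omega$ denote orthogonal projections. $Q:=\{x\in X:\langle F(x),y-x\rangle\ge0\ \forall y\in X\}$ is assumed nonempty. $D_X:=\sup_{x,y\in X}\|x-y\|$, $C_H:=\sup_{x\in X}\|H(x)\|$, $B_H:=\sup_{x\in Q}\|H(x)\|$, $\mathrm{dist}(y,Q)$ is the Euclidean distance to $Q$. $\mathrm{Gap}(z,H,Q):=\sup_{x\in Q}\langle H(x),z-x\rangle$, $\mathrm{Gap}(z,F,X):=\sup_{x\in X}\langle F(x),z-x\rangle$. $Q$ is $\sigma$-weakly sharp of order $\mathcal M\ge1$ ($\sigma>0$) if $\langle F(x),y-x\rangle\ge\sigma\,\mathrm{dist}(y,Q)^{\mathcal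 M}$ for all $x\in Q$, $y\in X$. IneIREG method: start with $x_0=x_{-1}\in X$; for $k=0,1,\dots$, with parameters $\alpha_k\ge0$, $\lambda_k>0$, $\eta_k>0$, set $w_k=x_k+\alpha_k(x_k-x_{k-1})$, $w'_k=P_\Omega(w_k)$, $y_k=P_X\big(w_k-\lambda_k(F(w'_k)+\eta_kH(w'_k))\big)$, $x_{k+1}=P_X\big(w_k-\lambda_k(F(y_k)+\eta_kH(y_k))\big)$. *)

(* Defs.v *)
From HB Require Import structures.
From mathcomp Require Import all_boot all_order all_algebra.
From mathcomp Require Import all_classical all_reals all_analysis.
Set Implicit Arguments. Unset Strict Implicit. Unset Printing Implicit Defensive.
Import Order.TTheory GRing.Theory Num.Theory.
Import numFieldNormedType.Exports.
Local Open Scope classical_set_scope.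
Local Open Scope ring_scope.

Section Defs.
Variables (R : realType) (n : nat).
Notation vec := 'rV[R]_n.

Definition dotv (u v : vec) : R := \sum_(i < n) u 0 i * v 0 i.
Definition normv (u : vec) : R := Num.sqrt (dotv u u).

Definition euc_convex_set (A : set vec) : Prop :=
  forall x y t, A x -> A y -> 0 <= t -> t <= 1 -> A (t *: x + (1 - t) *: y).

Definition is_euc_projection (A : set vec) (p : vec -> vec) : Prop :=
  forall x, A (p x) /\ forall y, A y -> normv (x - p x) <= normv (x - y).

Definition op_monotone_on (D : set vec) (G : vec -> vec) : Prop :=
  forall x y, D x -> D y -> 0 <= dotv (G x - G y) (x - y).
Definition op_strongly_monotone_on (D : set vec) (G : vec -> vec) (mu : R) : Prop :=
  forall x y, D x -> D y -> mu * normv (x - y) ^+ 2 <= dotv (G x - G y) (x - y).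
Definition op_lipschitz_on (D : set vec) (G : vec -> vec) (L : R) : Prop :=
  forall x y, D x -> D y -> normv (G x - G y) <= L * normv (x - y).

Definition VIsol (F : vec -> vec) (X : set vec) : set vec :=
  [set x | X x /\ forall y, X y -> 0 <= dotv (F x) (y - x)].

Definition euc_diam (X : set vec) : R :=
  sup [set r | exists x y, X x /\ X y /\ r = normv (x - y)].
Definition euc_supnorm (H : vec -> vec) (A : set vec) : R :=
  sup [set r | exists x, A x /\ r = normv (H x)].
Definition euc_dist (y : vec) (Q : set vec) : R :=
  inf [set r | exists x, Q x /\ r = normv (y - x)].
Definition Gap (z : vec) (G : vec -> vec) (A : set vec) : R :=
  sup [set r | exists x, A x /\ r = dotv (G x) (z - x)].

Definition euc_weakly_sharp (F : vec -> vec) (X Q : set vec) (sigma M : R) : Prop :=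
  forall x y, Q x -> X y -> sigma * (euc_dist y Q `^ M) <= dotv (F x) (y - x).

(* x_{k-1}, with the convention x_{-1} = x_0 *)
Definition prev_iter (x : nat -> vec) (k : nat) : vec :=
  if k is k'.+1 then x k' else x 0%N.

End Defs.

(* Main.v *)
Require Import Defs.
From HB Require Import structures.
From mathcomp Require Import all_boot all_order all_algebra.
From mathcomp Require Import all_classical all_reals all_analysis.
From mathcomp Require Import ring lra.
Set Implicit Arguments. Unset Strict Implicit. Unset Printing Implicit Defensive.
Import Order.TTheory GRing.Theory Num.Theory.
Import numFieldNormedType.Exports.
Local Open Scope classical_set_scope.
Local Open Scope ring_scope.

Section Vec.
Variables (R : realType) (n : nat).
Implicit Types (u v z : 'rV[R]_n).

Lemma dotvC u v : dotv u v = dotv v u.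
Proof. by rewrite /dotv; apply: eq_bigr => i _; rewrite mulrC. Qed.

Lemma dotvDl u v z : dotv (u + v) z = dotv u z + dotv v z.
Proof. by rewrite /dotv -big_split; apply: eq_bigr => i _; rewrite mxE mulrDl. Qed.

Lemma dotvDr u v z : dotv z (u + v) = dotv z u + dotv z v.
Proof. by rewrite dotvC dotvDl !(dotvC z). Qed.

Lemma dotvZl a u v : dotv (a *: u) v = a * dotv u v.
Proof. by rewrite /dotv mulr_sumr; apply: eq_bigr => i _; rewrite mxE mulrA. Qed.

Lemma dotvZr a u v : dotv u (a *: v) = a * dotv u v.
Proof. by rewrite dotvC dotvZl dotvC. Qed.

Lemma dotvNl u v : dotv (- u) v = - dotv u v.
Proof. by rewrite -scaleN1r dotvZl mulN1r. Qed.

Lemma dotvNr u v : dotv u (- v) = - dotv u v.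
Proof. by rewrite -scaleN1r dotvZr mulN1r. Qed.

Lemma dotvBl u v z : dotv (u - v) z = dotv u z - dotv v z.
Proof. by rewrite dotvDl dotvNl. Qed.

Lemma dotvBr u v z : dotv z (u - v) = dotv z u - dotv z v.
Proof. by rewrite dotvDr dotvNr. Qed.

Lemma dotv0r u : dotv u 0 = 0.
Proof. by rewrite /dotv big1 // => i _; rewrite mxE mulr0. Qed.

Lemma dotv_ge0 u : 0 <= dotv u u.
Proof. by rewrite /dotv sumr_ge0 // => i _; rewrite -expr2 sqr_ge0. Qed.

Lemma normv_ge0 u : 0 <= normv u.
Proof. exact: sqrtr_ge0. Qed.

Lemma normv_sq u : normv u ^+ 2 = dotv u u.
Proof. by rewrite /normv sqr_sqrtr // dotv_ge0. Qed.

Lemma normv_le_dot u v : normv u <= normv v -> dotv u u <= dotv v v.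
Proof.
move=> h; rewrite -!normv_sq !expr2; apply: ler_pM => //; exact: normv_ge0.
Qed.

Lemma dot_le_normv u c : 0 <= c -> dotv u u <= c ^+ 2 -> normv u <= c.
Proof.
move=> c0 h; rewrite /normv -(ger0_norm c0) -sqrtr_sqr.
by rewrite ler_sqrt // exprn_ge0.
Qed.

Lemma young2 u v r : 0 < r -> 2 * dotv u v <= r * dotv u u + r^-1 * dotv v v.
Proof.
move=> r0; have := dotv_ge0 (r *: u - v).
rewrite !(dotvBl, dotvBr, dotvZl, dotvZr) (dotvC v u) => h.
have hr : 0 < r^-1 by rewrite invr_gt0.
have : 0 <= r^-1 * (r * (r * dotv u u) - r * dotv u v - (r * dotv u v - dotv v v))
  by apply: mulr_ge0 => //; apply: ltW.
rewrite !mulrBr !mulrA mulVf ?gt_eqF // !mul1r.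
lra.
Qed.

Lemma dot_le_sqsum u v : 2 * dotv u v <= dotv u u + dotv v v.
Proof. by have := @young2 u v 1 ltr01; rewrite invr1 !mul1r. Qed.

Lemma cs_zero u v : dotv u u = 0 -> dotv u v <= 0.
Proof.
move=> u0; rewrite leNgt; apply/negP => h.
have hv := dotv_ge0 v.
set a := dotv u v in h *; set b := dotv v v in hv *.
have hb1 : 0 < b + 1 by lra.
have r0 : 0 < (b + 1) / a by rewrite divr_gt0.
have := @young2 u v ((b + 1) / a) r0; rewrite u0 mulr0 add0r invf_div -/a -/b.
have : a / (b + 1) * b <= a / (b + 1) * (b + 1).
  by rewrite ler_pM2l ?divr_gt0 //; lra.
rewrite divfK ?gt_eqF //; lra.
Qed.

Lemma cauchy_schwarz u v : dotv u v <= normv u * normv v.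
Proof.
have nu := normv_ge0 u; have nv := normv_ge0 v.
have [u0|upos] := eqVneq (normv u) 0.
  rewrite u0 mul0r; apply: cs_zero; by rewrite -normv_sq u0 expr0n.
have [v0|vpos] := eqVneq (normv v) 0.
  rewrite v0 mulr0 dotvC; apply: cs_zero; by rewrite -normv_sq v0 expr0n.
have up : 0 < normv u by rewrite lt_def upos.
have vp : 0 < normv v by rewrite lt_def vpos.
have := @young2 u v (normv v / normv u); rewrite divr_gt0 // => /(_ isT).
rewrite invf_div -!normv_sq.
have -> : normv v / normv u * normv u ^+ 2 = normv u * normv v.
  by rewrite expr2 mulrA divfK ?gt_eqF // mulrC.
have -> : normv u / normv v * normv v ^+ 2 = normv u * normv v.
  by rewrite expr2 mulrA divfK ?gt_eqF.
lra.
Qed.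

Lemma cauchy_schwarzN u v : - dotv u v <= normv u * normv v.
Proof.
have := cauchy_schwarz (- u) v; rewrite dotvNl.
suff -> : normv (- u) = normv u by [].
by rewrite /normv dotvNl dotvNr opprK.
Qed.

Lemma normv_triangle u v : normv (u + v) <= normv u + normv v.
Proof.
apply: dot_le_normv; first by apply: addr_ge0; exact: normv_ge0.
rewrite !(dotvDl, dotvDr) (dotvC v u) sqrrD -!normv_sq.
have := cauchy_schwarz u v; lra.
Qed.

Lemma normvN u : normv (- u) = normv u.
Proof. by rewrite /normv dotvNl dotvNr opprK. Qed.

Lemma normvB u v : normv (u - v) = normv (v - u).
Proof. by rewrite -normvN opprB. Qed.

Lemma dotv_sumr u (K : nat) (c : nat -> R) (v : nat -> 'rV[R]_n) :
  dotv u (\sum_(j < K) c j *: v j) = \sum_(j < K) c j * dotv u (v j).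
Proof.
elim: K => [|K IH]; first by rewrite !big_ord0 dotv0r.
by rewrite !big_ord_recr /= dotvDr IH dotvZr.
Qed.

End Vec.

Ltac dexp := rewrite ?(dotvDl, dotvDr, dotvBl, dotvBr, dotvZl, dotvZr, dotvNl, dotvNr).

Section Proj.
Variables (R : realType) (n : nat).
Implicit Types (u v z : 'rV[R]_n).

Lemma proj_key (e d : 'rV[R]_n) t : 0 < t ->
  dotv e e <= dotv (e - t *: d) (e - t *: d) -> 2 * dotv e d <= t * dotv d d.
Proof.
move=> t0; dexp; rewrite (dotvC d e) => h.
have : t * (2 * dotv e d) <= t * (t * dotv d d) by lra.
by rewrite ler_pM2l.
Qed.

Lemma proj_vi (A : set 'rV[R]_n) P z v :
  euc_convex_set A -> is_euc_projection A P -> A v ->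
  dotv (z - P z) (v - P z) <= 0.
Proof.
move=> cA pA Av; have [Au hmin] := pA z.
set u := P z in Au hmin *.
rewrite leNgt; apply/negP => ha.
set a := dotv (z - u) (v - u) in ha.
set b := dotv (v - u) (v - u).
have hb : 0 <= b by exact: dotv_ge0.
have ab : 0 < a + b by lra.
set t := a / (a + b).
have t0 : 0 < t by rewrite divr_gt0.
have t1 : t <= 1 by rewrite ler_pdivrMr // mul1r; lra.
have At := cA v u t Av Au (ltW t0) t1.
have := normv_le_dot (hmin _ At).
have -> : z - (t *: v + (1 - t) *: u) = (z - u) - t *: (v - u).
  by apply/rowP => i; rewrite !mxE; ring.
move=> /(proj_key t0); rewrite -/a -/b => h2.
have : t * b <= a.
  rewrite /t mulrAC ler_pdivrMr //; nra.
lra.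
Qed.

Lemma proj_nonexp (A : set 'rV[R]_n) P z v :
  euc_convex_set A -> is_euc_projection A P -> A v ->
  dotv (P z - v) (P z - v) <= dotv (z - v) (z - v).
Proof.
move=> cA pA Av; have := proj_vi z cA pA Av.
have -> : z - v = (z - P z) + (P z - v) by apply/rowP => i; rewrite !mxE; ring.
have -> : v - P z = - (P z - v) by apply/rowP => i; rewrite !mxE; ring.
move: (z - P z) (P z - v) => e f.
dexp; rewrite (dotvC f e) => h.
have := dotv_ge0 e; lra.
Qed.

Lemma convex_comb (A : set 'rV[R]_n) (K : nat) (c : nat -> R) (v : nat -> 'rV[R]_n) :
  euc_convex_set A -> (forall j, 0 < c j) -> (forall j, A (v j)) ->
  A ((\sum_(j < K.+1) c j)^-1 *: \sum_(j < K.+1) c j *: v j).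
Proof.
move=> cA cp Av; elim: K => [|K IH].
  rewrite !big_ord1 scalerA mulVf ?gt_eqF // scale1r; exact: Av.
set S := \sum_(j < K.+1) c j in IH.
have S0 : 0 < S by rewrite /S big_ord_recr /= ltr_wpDl // sumr_ge0 // => j _; apply: ltW.
set V := \sum_(j < K.+1) c j *: v j in IH.
rewrite big_ord_recr /= -/S big_ord_recr /= -/V.
have SK : 0 < S + c K.+1 by rewrite addr_gt0.
set t := S / (S + c K.+1).
have t0 : 0 <= t by rewrite divr_ge0 // ltW.
have t1 : t <= 1 by rewrite ler_pdivrMr // mul1r lerDl ltW.
have := cA _ _ t IH (Av K.+1) t0 t1.
congr A; apply/rowP => i; rewrite !mxE.
rewrite /t; field; rewrite ?gt_eqF // ?andbT.
Qed.

End Proj.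

Section Bound.
Variables (R : realType) (n : nat).

Lemma compact_normv_bound (X : set 'rV[R]_n) : compact X ->
  exists B, 0 <= B /\ forall x y, X x -> X y -> normv (x - y) <= B.
Proof.
move=> /compact_bounded [M [Mr HM]].
set M' := `|M| + 1.
have hM' : M < M' by rewrite /M' (le_lt_trans (ler_norm M)) // ltrDl.
have M'0 : 0 <= M' by rewrite /M' addr_ge0.
have ent : forall x i, X x -> `|x 0 i| <= M'.
  move=> x i Xx; apply: le_trans (HM _ hM' _ Xx).
  change (`|x 0 i| <= mx_norm x); rewrite mx_normrE.
  exact: (le_bigmax _ (fun ij : 'I_1 * 'I_n => `|x ij.1 ij.2|) (0, i)).
exists (Num.sqrt (n%:R * (2 * M') ^+ 2)); split; first exact: sqrtr_ge0.
move=> x y Xx Xy; apply: dot_le_normv; first exact: sqrtr_ge0.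
rewrite sqr_sqrtr ?mulr_ge0 ?exprn_ge0 ?mulr_ge0 //.
have -> : n%:R * (2 * M') ^+ 2 = \sum_(i < n) (2 * M') ^+ 2.
  by rewrite sumr_const card_ord mulr_natl.
rewrite /dotv; apply: ler_sum => i _.
have hi : `|(x - y) 0 i| <= 2 * M'.
  rewrite !mxE (le_trans (ler_normB _ _)) //.
  have := ent x i Xx; have := ent y i Xy; lra.
apply: le_trans (ler_norm _) _; rewrite normrM expr2.
by apply: ler_pM.
Qed.

End Bound.

Section Step.
Variables (R : realType) (n : nat).
Implicit Types (u v z : 'rV[R]_n).

Lemma eg_step (G : 'rV[R]_n -> 'rV[R]_n) (X Om : set 'rV[R]_n) PX POm
  (L lam m : R) xx w y xp wp :
  euc_convex_set X -> is_euc_projection X PX ->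
  euc_convex_set Om -> is_euc_projection Om POm -> (forall z, X z -> Om z) ->
  X xx -> wp = POm w -> y = PX (w - lam *: G wp) -> xp = PX (w - lam *: G y) ->
  0 <= L -> 0 < lam ->
  normv (G wp - G y) <= L * normv (wp - y) ->
  m * dotv (y - xx) (y - xx) <= dotv (G y - G xx) (y - xx) ->
  dotv (xp - xx) (xp - xx) <= dotv (w - xx) (w - xx)
     - (1 - lam ^+ 2 * L ^+ 2) * dotv (w - y) (w - y)
     - 2 * lam * m * dotv (y - xx) (y - xx) - 2 * lam * dotv (G xx) (y - xx).
Proof.
move=> cX pX cO pO XO Xx ewp ey exp L0 l0 hL hm.
have Xy : X y by rewrite ey; case: (pX (w - lam *: G wp)).
have Xxp : X xp by rewrite exp; case: (pX (w - lam *: G y)).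
have P1 : dotv (w - lam *: G y - xp) (xx - xp) <= 0.
  by have := proj_vi (w - lam *: G y) cX pX Xx; rewrite -exp.
have P2 : dotv (w - lam *: G wp - y) (xp - y) <= 0.
  by have := proj_vi (w - lam *: G wp) cX pX Xxp; rewrite -ey.
have NE : dotv (wp - y) (wp - y) <= dotv (w - y) (w - y).
  by rewrite ewp; apply: (proj_nonexp _ cO pO); apply: XO.
have Lsq : dotv (G wp - G y) (G wp - G y) <= L ^+ 2 * dotv (w - y) (w - y).
  apply: le_trans (_ : L ^+ 2 * dotv (wp - y) (wp - y) <= _); last first.
    by apply: ler_wpM2l => //; rewrite exprn_ge0.
  rewrite -!normv_sq -exprMn !expr2; apply: ler_pM => //; exact: normv_ge0.
have Y := dot_le_sqsum (lam *: (G wp - G y)) (xp - y).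
have hm' : lam * (m * dotv (y - xx) (y - xx)) <= lam * dotv (G y - G xx) (y - xx).
  by rewrite ler_pM2l.
move: Y; rewrite !dotvZl !dotvZr.
have Lsq' : lam * (lam * dotv (G wp - G y) (G wp - G y)) <= lam * (lam * (L ^+ 2 * dotv (w - y) (w - y))).
  by rewrite !ler_pM2l.
move: P1 P2 Lsq' hm'.
move: (G wp) (G y) (G xx) => gw gy gx.
dexp.
have := dotvC w xx; have := dotvC w y; have := dotvC w xp; have := dotvC w gw;
have := dotvC w gy; have := dotvC w gx; have := dotvC xx y; have := dotvC xx xp;
have := dotvC xx gw; have := dotvC xx gy; have := dotvC xx gx; have := dotvC y xp;
have := dotvC y gw; have := dotvC y gy; have := dotvC y gx; have := dotvC xp gw;
have := dotvC xp gy; have := dotvC xp gx; have := dotvC gw gy; have := dotvC gw gx;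
have := dotvC gy gx.
lra.
Qed.

End Step.

Section Step2.
Variables (R : realType) (n : nat).
Implicit Types (u v z s t : 'rV[R]_n).

Lemma beta_comb s t a b : 0 < a -> 0 < b ->
  (a^-1 + b^-1)^-1 * dotv (s + t) (s + t) <= a * dotv s s + b * dotv t t.
Proof.
move=> a0 b0.
have -> : (a^-1 + b^-1)^-1 = a * b / (a + b).
  by field; rewrite ?gt_eqF ?addr_gt0 //.
have ab : 0 < a + b by rewrite addr_gt0.
rewrite mulrAC ler_pdivrMr //.
have Y := young2 s t (divr_gt0 a0 b0).
rewrite invf_div in Y.
have : a * b * (2 * dotv s t) <= a * b * (a / b * dotv s s + b / a * dotv t t).
  by rewrite ler_pM2l ?mulr_gt0.
rewrite mulrDr !mulrA.
have -> : a * b * a / b = a * a by field; rewrite gt_eqF.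
have -> : a * b * b / a = b * b by field; rewrite gt_eqF.
dexp; rewrite (dotvC t s) => h.
clear Y; lra.
Qed.

Lemma inertia_id (xk xprev xx : 'rV[R]_n) (alpha : R) :
  dotv (xk + alpha *: (xk - xprev) - xx) (xk + alpha *: (xk - xprev) - xx) =
  dotv (xk - xx) (xk - xx) + alpha * (dotv (xk - xx) (xk - xx) - dotv (xprev - xx) (xprev - xx))
  + (alpha + alpha ^+ 2) * dotv (xk - xprev) (xk - xprev).
Proof.
have -> : xk + alpha *: (xk - xprev) - xx = (xk - xx) + alpha *: ((xk - xx) - (xprev - xx)).
  by apply/rowP => i; rewrite !mxE; ring.
have -> : xk - xprev = (xk - xx) - (xprev - xx) by apply/rowP => i; rewrite !mxE; ring.
move: (xk - xx) (xprev - xx) => a b.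
dexp; rewrite (dotvC b a); ring.
Qed.

End Step2.

Section Potential.
Variable (R : realType).

Lemma prod_pos (beta : nat -> R) k : (forall k, 0 < beta k < 1) ->
  0 < \prod_(i < k) (1 - beta i).
Proof.
move=> hb; elim: k => [|k IH]; first by rewrite big_ord0.
rewrite big_ord_recr /= mulr_gt0 //; have := hb k; lra.
Qed.

Lemma potential (phi g lam alpha beta : nat -> R) (D2 : R) :
  (forall k, 0 <= phi k <= D2) -> (forall k, 0 < beta k < 1) ->
  (forall k, 0 <= alpha k) -> alpha 0%N <= 1 ->
  (forall k, alpha k.+1 <= (1 - beta k) * alpha k) ->
  (forall k, phi k.+1 <= (1 - beta k) * (phi k + alpha k * (phi k - phi k.-1)
        + 2 * alpha k * D2) - 2 * lam k * g k) ->
  forall K, 2 * \sum_(k < K) lam k * (\prod_(i < k.+1) (1 - beta i))^-1 * g k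
     <= (2 * K%:R + 1) * D2.
Proof.
move=> hphi hb ha ha0 hrec hstep K.
pose q k := (\prod_(i < k) (1 - beta i))^-1.
have qpos k : 0 < q k by rewrite /q invr_gt0 prod_pos.
have qS k : q k.+1 * (1 - beta k) = q k.
  rewrite /q big_ord_recr /= invfM -mulrA mulVf ?mulr1 //.
  by have /andP[_ h] := hb k; rewrite gt_eqF //; lra.
pose gam k := q k * alpha k.
have gam0 k : 0 <= gam k by rewrite mulr_ge0 // ltW.
have gamS k : gam k.+1 <= gam k.
  rewrite /gam -(qS k) -mulrA ler_pM2l //.
have gam1 k : gam k <= 1.
  elim: k => [|k IH]; last by apply: le_trans (gamS k) IH.
  by rewrite /gam /q big_ord0 invr1 mul1r.
have D20 : 0 <= D2 by have := hphi 0%N; lra.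
pose U k := q k * phi k - gam k * phi k.-1 + gam k * D2.
have U0 : U 0%N <= D2.
  rewrite /U /gam /q big_ord0 invr1 !mul1r /=.
  have := hphi 0%N => /andP [h1 h2].
  have : (1 - alpha 0%N) * phi 0%N <= (1 - alpha 0%N) * D2.
    by apply: ler_wpM2l => //; lra.
  lra.
have UK k : 0 <= U k.
  rewrite /U; have := hphi k => /andP [h1 h2]; have := hphi k.-1 => /andP [h3 h4].
  have : 0 <= q k * phi k by rewrite mulr_ge0 // ltW.
  have : gam k * phi k.-1 <= gam k * D2 by apply: ler_wpM2l.
  lra.
have main : forall K, 2 * \sum_(k < K) lam k * q k.+1 * g k + U K <= U 0%N + 2 * K%:R * D2.
  elim=> [|k IH]; first by rewrite big_ord0 mulr0 add0r mulr0 mul0r addr0 || (rewrite big_ord0; lra).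
  rewrite big_ord_recr /=.
  have st := hstep k.
  have st' : q k.+1 * phi k.+1 <= q k.+1 * ((1 - beta k) * (phi k + alpha k * (phi k - phi k.-1)
        + 2 * alpha k * D2) - 2 * lam k * g k) by rewrite ler_pM2l.
  rewrite mulrBr mulrA qS in st'.
  have h1 : (gam k - gam k.+1) * phi k <= (gam k - gam k.+1) * D2.
    by apply: ler_wpM2l; [have := gamS k; lra | have := hphi k; case/andP].
  have h2 := gam1 k.
  have h3 : gam k * D2 <= D2 by rewrite -[X in _ <= X]mul1r ler_wpM2r.
  have -> : (k.+1)%:R = k%:R + 1 :> R by rewrite -addn1 natrD.
  move: st' h1 h2 h3 IH; rewrite /U /gam /=; lra.
have := main K; have := UK K; rewrite -/(q _); lra.
Qed.

End Potential.

Section ExpB.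
Variable (R : realType).

Lemma exp_prod (beta : nat -> R) K : (forall k, 0 < beta k < 1) ->
  expR (\sum_(i < K) beta i) <= (\prod_(i < K) (1 - beta i))^-1.
Proof.
move=> hb; elim: K => [|K IH]; first by rewrite !big_ord0 expR0 invr1.
rewrite !big_ord_recr /= expRD invfM.
have /andP [b0 b1] := hb K.
have hK : expR (beta K) <= (1 - beta K)^-1.
  have := expR_ge1Dx (- beta K); rewrite expRN.
  have e0 := expR_gt0 (beta K).
  have h1 : 0 < 1 - beta K by lra.
  move=> h.
  have : (1 - beta K) * expR (beta K) <= (expR (beta K))^-1 * expR (beta K).
    by rewrite ler_pM2r //; lra.
  rewrite mulVf ?gt_eqF // => h2.
  by rewrite -div1r ler_pdivlMr // mulrC.
by apply: ler_pM => //; exact: ltW (expR_gt0 _).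
Qed.

Lemma log_bound (beta : nat -> R) c A K : (forall k, 0 < beta k < 1) -> 0 < c ->
  (forall k, c^-1 <= beta k) -> c * ln A <= K%:R -> 0 < A ->
  A <= (\prod_(i < K) (1 - beta i))^-1.
Proof.
move=> hb c0 hc hK A0.
apply: le_trans (exp_prod K hb).
rewrite -[X in X <= _](@lnK _ A) ?posrE // ler_expR.
apply: le_trans (_ : K%:R * c^-1 <= _).
  by rewrite -(ler_pM2l c0) mulrCA mulfV ?gt_eqF // mulr1.
have -> : K%:R * c^-1 = \sum_(i < K) c^-1 by rewrite sumr_const card_ord mulr_natl.
by apply: ler_sum => i _; apply: hc.
Qed.

End ExpB.

Section SupInf.
Variables (R : realType) (n : nat).

Lemma sup_ub_of (S : set R) M r : S r -> (forall s, S s -> s <= M) -> r <= sup S.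
Proof.
move=> Sr hM; have hs : has_sup S by split; [exists r | exists M => s /hM].
exact: (sup_upper_bound hs).
Qed.

Lemma sup_le_of (S : set R) M : S !=set0 -> (forall s, S s -> s <= M) -> sup S <= M.
Proof. by move=> S0 hM; apply: ge_sup => // s /hM. Qed.

Lemma inf_ge_of (S : set R) c : S !=set0 -> (forall s, S s -> c <= s) -> c <= inf S.
Proof. by move=> S0 hM; apply: lb_le_inf => // s /hM. Qed.

Lemma Gap_le (z : 'rV[R]_n) G (A : set 'rV[R]_n) M : A !=set0 ->
  (forall x, A x -> dotv (G x) (z - x) <= M) -> Gap z G A <= M.
Proof.
move=> [a Aa] h; apply: sup_le_of; first by exists (dotv (G a) (z - a)), a.
by move=> s [x [Ax ->]]; apply: h.
Qed.

Lemma Gap_ge (z : 'rV[R]_n) G (A : set 'rV[R]_n) M x : A x ->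
  (forall x, A x -> dotv (G x) (z - x) <= M) -> dotv (G x) (z - x) <= Gap z G A.
Proof.
move=> Ax h; apply: (@sup_ub_of _ M); first by exists x.
by move=> s [x' [Ax' ->]]; apply: h.
Qed.

Lemma supnorm_ub (H : 'rV[R]_n -> 'rV[R]_n) (A : set 'rV[R]_n) M x :
  (forall x, A x -> normv (H x) <= M) -> A x -> normv (H x) <= euc_supnorm H A.
Proof.
move=> h Ax; apply: (@sup_ub_of _ M); first by exists x.
by move=> s [x' [Ax' ->]]; apply: h.
Qed.

Lemma diam_ub (X : set 'rV[R]_n) x y : compact X -> X x -> X y ->
  normv (x - y) <= euc_diam X.
Proof.
move=> /compact_normv_bound [B [B0 hB]] Xx Xy.
apply: (@sup_ub_of _ B); first by exists x, y.
by move=> s [a [b [Xa [Xb ->]]]]; apply: hB.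
Qed.

Lemma dist_ge (y : 'rV[R]_n) (Q : set 'rV[R]_n) c : Q !=set0 ->
  (forall x, Q x -> c <= normv (y - x)) -> c <= euc_dist y Q.
Proof.
move=> [a Qa] h; apply: inf_ge_of; first by exists (normv (y - a)), a.
by move=> s [x [Qx ->]]; apply: h.
Qed.

End SupInf.

Section More.
Variables (R : realType) (n : nat).
Implicit Types (u v : 'rV[R]_n).

Lemma normvZ (a : R) v : normv (a *: v) = `|a| * normv v.
Proof.
rewrite /normv dotvZl dotvZr mulrA -expr2 sqrtrM ?sqr_ge0 //.
by rewrite sqrtr_sqr.
Qed.

Lemma normv_le_sq u c : normv u <= c -> dotv u u <= c ^+ 2.
Proof.
move=> h; rewrite -normv_sq !expr2; apply: ler_pM => //; exact: normv_ge0.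
Qed.

Lemma dot_avg u xx (K : nat) (c : nat -> R) (v : nat -> 'rV[R]_n) :
  0 < \sum_(j < K) c j ->
  dotv u ((\sum_(j < K) c j)^-1 *: (\sum_(j < K) c j *: v j) - xx) =
  (\sum_(j < K) c j)^-1 * \sum_(j < K) c j * dotv u (v j - xx).
Proof.
move=> S0; rewrite dotvBr dotvZr dotv_sumr.
have -> : \sum_(j < K) c j * dotv u (v j - xx) =
  \sum_(j < K) c j * dotv u (v j) - (\sum_(j < K) c j) * dotv u xx.
  by rewrite mulr_suml -sumrB; apply: eq_bigr => j _; rewrite dotvBr mulrBr.
by rewrite mulrBr mulrA mulVf ?gt_eqF // mul1r.
Qed.

End More.

Unset Implicit Arguments. Set Strict Implicit.

Theorem theorem4p20 (R : realType) (n : nat)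
  (F H : 'rV[R]_n -> 'rV[R]_n) (DomF DomH X Omega : set 'rV[R]_n)
  (LF LH mu : R) (PX POm : 'rV[R]_n -> 'rV[R]_n)
  (eps D0 eta llam ulam : R) (lam alpha : nat -> R)
  (x y w w' : nat -> 'rV[R]_n) :
  (* standing assumptions *)
  0 < LF -> 0 < LH ->
  op_monotone_on DomF F -> op_lipschitz_on DomF F LF ->
  op_monotone_on DomH H -> op_lipschitz_on DomH H LH ->
  0 < mu -> op_strongly_monotone_on DomH H mu ->
  X !=set0 -> compact X -> euc_convex_set X ->
  Omega !=set0 -> closed Omega -> euc_convex_set Omega ->
  subset X Omega -> subset Omega (setI DomF DomH) ->
  is_euc_projection X PX -> is_euc_projection Omega POm ->
  VIsol F X !=set0 ->
  (* parameters *)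
  0 < eps -> eps < D0 ->
  ulam * euc_supnorm H X * euc_diam X / llam <= D0 ->
  eta = eps / (2 * D0) ->
  0 < llam -> llam <= ulam -> ulam < (LF + eta * LH)^-1 ->
  (forall k, llam <= lam k /\ lam k <= ulam) ->
  (forall k, 0 <= alpha k) ->
  alpha 0%N <= 1 ->
  (let L := LF + eta * LH in
   let beta k := ((1 - lam k ^+ 2 * L ^+ 2)^-1 + (2 * lam k * eta * mu)^-1)^-1 in
   forall k, alpha k.+1 <= (1 - beta k) * alpha k) ->
  (* the IneIREG iteration *)
  X (x 0%N) ->
  (forall k, w k = x k + alpha k *: (x k - prev_iter x k)) ->
  (forall k, w' k = POm (w k)) ->
  (forall k, y k = PX (w k - lam k *: (F (w' k) + eta *: H (w' k)))) ->
  (forall k, x k.+1 = PX (w k - lam k *: (F (y k) + eta *: H (y k)))) ->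
  let L := LF + eta * LH in
  let beta k := ((1 - lam k ^+ 2 * L ^+ 2)^-1 + (2 * lam k * eta * mu)^-1)^-1 in
  let p k := (\prod_(i < k.+1) (1 - beta i))^-1 in
  let Lambda k := \sum_(j < k) lam j * eta * p j in
  let ybar k := (Lambda k)^-1 *: \sum_(j < k) (lam j * eta * p j) *: y j in
  let Q := VIsol F X in
  let BH := euc_supnorm H Q in
  forall k : nat, (1 <= k)%N ->
    Num.ceil (((1 - ulam ^+ 2 * L ^+ 2)^-1 + D0 / (llam * mu * eps))
              * ln (2 * (k.+1)%:R * euc_diam X ^+ 2 * D0 / (llam * eps ^+ 2)))
      <= k%:Z ->
    ((- BH * euc_dist (ybar k) Q <= Gap (ybar k) H Q /\ Gap (ybar k) H Q <= eps)
     /\ (0 <= Gap (ybar k) F X /\ Gap (ybar k) F X <= eps))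
    /\ (forall sigma M : R, 0 < sigma -> 1 <= M -> euc_weakly_sharp F X Q sigma M ->
          - (BH / sigma `^ M^-1) * eps `^ M^-1 <= Gap (ybar k) H Q).

Proof.
move=> LF0 LH0 monF lipF monH lipH mu0 smH [x0 Xx0] cptX cvxX OmN clO cvxO XO OD pX pO
  [xs Qxs] eps0 epsD0 hD0 eeta llam0 lle ulL hlam hal0 hal0le hrec Xx00 ew ew' ey ex
  L beta p Lambda ybar Q BH k k1 hceil.
have hrec' : forall k, alpha k.+1 <= (1 - beta k) * alpha k := hrec.
clear hrec.
have D00 : 0 < D0 := lt_trans eps0 epsD0.
have eta0 : 0 < eta by rewrite eeta divr_gt0 // mulr_gt0.
have L0 : 0 < L by rewrite /L addr_gt0 // mulr_gt0.
have lam0 j : 0 < lam j by have [h _] := hlam j; exact: lt_le_trans llam0 h.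
have uL : ulam * L < 1.
  by move: ulL; rewrite -/L -(ltr_pM2r L0) mulVf ?gt_eqF.
have lamL j : 0 <= lam j * L <= ulam * L.
  have [_ h] := hlam j; apply/andP; split; first by rewrite mulr_ge0 // ltW.
  by rewrite ler_pM2r.
have a0 j : 0 < 1 - lam j ^+ 2 * L ^+ 2.
  have /andP [h1 h2] := lamL j; rewrite -exprMn; nra.
have a1 j : 1 - ulam ^+ 2 * L ^+ 2 <= 1 - lam j ^+ 2 * L ^+ 2.
  have /andP [h1 h2] := lamL j; rewrite -!exprMn; nra.
have b0 j : 0 < 2 * lam j * eta * mu by rewrite !mulr_gt0.
have hbeta j : 0 < beta j < 1.
  apply/andP; split; first by rewrite invr_gt0 addr_gt0 // invr_gt0.
  rewrite invf_lt1 ?addr_gt0 ?invr_gt0 //.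
  have : 1 <= (1 - lam j ^+ 2 * L ^+ 2)^-1.
    rewrite invf_ge1 //; have := a0 j; nra.
  have := b0 j; rewrite -invr_gt0; lra.
set c := (1 - ulam ^+ 2 * L ^+ 2)^-1 + D0 / (llam * mu * eps).
have ua0 : 0 < 1 - ulam ^+ 2 * L ^+ 2.
  have /andP [h1 h2] := lamL 0%N; rewrite -exprMn; nra.
have c0 : 0 < c by rewrite addr_gt0 ?invr_gt0 // divr_gt0 // !mulr_gt0.
have hc j : c^-1 <= beta j.
  rewrite /beta lef_pV2 ?posrE ?addr_gt0 ?invr_gt0 ?divr_gt0 ?mulr_gt0 //.
  apply: lerD.
    by rewrite lef_pV2 ?posrE.
  rewrite -invf_div lef_pV2 ?posrE ?divr_gt0 ?mulr_gt0 //.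
  have -> : 2 * lam j * eta * mu = lam j * mu * eps / D0.
    by rewrite eeta; field; rewrite gt_eqF.
  rewrite ler_pM2r ?invr_gt0 // ler_pM2r //.
  by have [h _] := hlam j; rewrite ler_pM2r.
have Xx : forall j, X (x j).
  case=> [|i] //; rewrite ex; have [h _] := pX (w i - lam i *: (F (y i) + eta *: H (y i))); exact: h.
have Xprev j : X (prev_iter x j) by case: j.
have pv j : prev_iter x j = x j.-1 by case: j.
have Xy j : X (y j).
  by rewrite ey; have [h _] := pX (w j - lam j *: (F (w' j) + eta *: H (w' j))); exact: h.
have Omw' j : Omega (w' j) by rewrite ew'; have [h _] := pO (w j); exact: h.
set D := euc_diam X.
have hD a b : X a -> X b -> normv (a - b) <= D by move=> Xa Xb; apply: diam_ub.
have D0' : 0 <= D by apply: le_trans (normv_ge0 (x0 - x0)) (hD _ _ Xx0 Xx0).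
have al1 j : alpha j <= 1.
  elim: j => [//|j IH]; apply: le_trans (hrec' j) _.
  have /andP [h1 h2] := hbeta j; have := hal0 j; nra.
pose G := fun z => F z + eta *: H z.
have GE z1 z2 : G z1 - G z2 = (F z1 - F z2) + eta *: (H z1 - H z2).
  by apply/rowP => i; rewrite !mxE; ring.
have Glip z1 z2 : Omega z1 -> Omega z2 -> normv (G z1 - G z2) <= L * normv (z1 - z2).
  move=> O1 O2; have [F1 H1] := OD _ O1; have [F2 H2] := OD _ O2.
  rewrite GE; apply: le_trans (normv_triangle _ _) _.
  rewrite normvZ ger0_norm; last exact: ltW.
  have := lipF _ _ F1 F2; have := lipH _ _ H1 H2 => h1 h2.
  have : eta * normv (H z1 - H z2) <= eta * (LH * normv (z1 - z2)) by rewrite ler_pM2l.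
  rewrite /L; lra.
have Gsm z1 z2 : X z1 -> X z2 ->
    eta * mu * dotv (z1 - z2) (z1 - z2) <= dotv (G z1 - G z2) (z1 - z2).
  move=> X1 X2; have [F1 H1] := OD _ (XO _ X1); have [F2 H2] := OD _ (XO _ X2).
  rewrite GE (dotvDl (F z1 - F z2)) dotvZl.
  have := monF _ _ F1 F2; have := smH _ _ H1 H2; rewrite normv_sq => h1 h2.
  have : eta * (mu * dotv (z1 - z2) (z1 - z2)) <= eta * dotv (H z1 - H z2) (z1 - z2)
    by rewrite ler_pM2l.
  lra.
have sumb xx : X xx -> forall K,
    2 * \sum_(j < K) lam j * p j * dotv (G xx) (y j - xx) <= (2 * K%:R + 1) * D ^+ 2.
  move=> Xxx K.
  pose phi := fun j => dotv (x j - xx) (x j - xx).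
  pose g := fun j => dotv (G xx) (y j - xx).
  have Hphi j : 0 <= phi j <= D ^+ 2.
    by rewrite /phi dotv_ge0 /=; apply: normv_le_sq; exact: hD.
  suff Hstep : forall j, phi j.+1 <= (1 - beta j) * (phi j + alpha j * (phi j - phi j.-1)
        + 2 * alpha j * D ^+ 2) - 2 * lam j * g j.
    exact: (@potential R phi g lam alpha beta (D ^+ 2) Hphi hbeta hal0 hal0le hrec' Hstep K).
  move=> j.
  have E := eg_step (G := G) cvxX pX cvxO pO XO Xxx (ew' j) (ey j) (ex j) (ltW L0) (lam0 j)
      (Glip _ _ (Omw' j) (XO _ (Xy j))) (Gsm _ _ (Xy j) Xxx).
  have CB : beta j * dotv (w j - xx) (w j - xx) <= (1 - lam j ^+ 2 * L ^+ 2) *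
      dotv (w j - y j) (w j - y j) + 2 * lam j * eta * mu * dotv (y j - xx) (y j - xx).
    have := beta_comb (w j - y j) (y j - xx) (a0 j) (b0 j).
    rewrite (_ : w j - y j + (y j - xx) = w j - xx) //.
    by apply/rowP => i; rewrite !mxE; ring.
  rewrite ew inertia_id pv in CB.
  rewrite ew inertia_id pv in E.
  rewrite /phi /g /=.
  have hDl : dotv (x j - x j.-1) (x j - x j.-1) <= D ^+ 2.
    by apply: normv_le_sq; apply: hD.
  have hDd := dotv_ge0 (x j - x j.-1).
  have hA : (alpha j + alpha j ^+ 2) * dotv (x j - x j.-1) (x j - x j.-1) <= 2 * alpha j * D ^+ 2.
    have ha := hal0 j; have hb := al1 j.
    have : (alpha j + alpha j ^+ 2) * dotv (x j - x j.-1) (x j - x j.-1) <=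
           (alpha j + alpha j ^+ 2) * D ^+ 2.
      by apply: ler_wpM2l => //; rewrite addr_ge0 ?exprn_ge0.
    have : (alpha j + alpha j ^+ 2) * D ^+ 2 <= 2 * alpha j * D ^+ 2.
      by apply: ler_wpM2r; rewrite ?exprn_ge0 //; nra.
    lra.
  have hb1 : 0 <= 1 - beta j by have /andP [_ h] := hbeta j; lra.
  move: (dotv (x j + alpha j *: (x j - x j.-1) - y j) (x j + alpha j *: (x j - x j.-1) - y j)) CB E => S CB E.
  set W := dotv (x j - xx) (x j - xx) + alpha j * _ + _ in CB E.
  have : (1 - beta j) * W <= (1 - beta j) * (dotv (x j - xx) (x j - xx) +
     alpha j * (dotv (x j - xx) (x j - xx) - dotv (x j.-1 - xx) (x j.-1 - xx)) +
     2 * alpha j * D ^+ 2).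
    by apply: ler_wpM2l => //; rewrite /W; lra.
  lra.
case: k k1 hceil => [//|k] _ hceil.
pose cc := fun j => lam j * eta * p j.
have pp j : 0 < p j by rewrite /p invr_gt0 prod_pos.
have cc0 j : 0 < cc j by rewrite /cc !mulr_gt0.
have Lam_ge : llam * eta * p k <= Lambda k.+1.
  rewrite /Lambda big_ord_recr /=.
  have : 0 <= \sum_(j < k) lam j * eta * p j.
    by apply: sumr_ge0 => j _; apply: ltW; exact: (cc0 j).
  have : llam * eta * p k <= lam k * eta * p k.
    by rewrite -!mulrA ler_pM2r ?mulr_gt0 //; have [h _] := hlam k.
  lra.
have Lam0 : 0 < Lambda k.+1.
  by apply: lt_le_trans Lam_ge; rewrite !mulr_gt0.
have key : (2 * (k.+1)%:R + 1) * D ^+ 2 <= 2 * eps * eta * llam * p k.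
  have rhs0 : 0 < 2 * eps * eta * llam * p k by rewrite !mulr_gt0.
  have [D00'|Dn0] := eqVneq D 0.
    by rewrite D00' expr0n /= mulr0 ltW.
  have Dp : 0 < D by rewrite lt_def Dn0 D0'.
  set A := 2 * (k.+2)%:R * D ^+ 2 * D0 / (llam * eps ^+ 2).
  have A0 : 0 < A.
    rewrite /A; apply: divr_gt0; last by rewrite mulr_gt0 // exprn_gt0.
    by rewrite !mulr_gt0 // ?exprn_gt0 // ltr0n.
  have hcA : c * ln A <= (k.+1)%:R by move: hceil; rewrite ceil_le_int.
  have hA := log_bound hbeta c0 hc hcA A0.
  have : 2 * eps * eta * llam * A <= 2 * eps * eta * llam * p k.
    by rewrite ler_pM2l ?mulr_gt0.
  have -> : 2 * eps * eta * llam * A = 2 * (k.+2)%:R * D ^+ 2.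
    by rewrite /A eeta; field; rewrite !gt_eqF.
  rewrite -natr1.
  have : 0 <= D ^+ 2 by rewrite exprn_ge0.
  nra.
have SB xx : X xx -> \sum_(j < k.+1) lam j * p j * dotv (G xx) (y j - xx) <= eps * Lambda k.+1.
  move=> Xxx; have := sumb xx Xxx k.+1.
  have : eps * (llam * eta * p k) <= eps * Lambda k.+1 by rewrite ler_pM2l.
  move: key; lra.
have GdotE xx v : dotv (G xx) v = dotv (F xx) v + eta * dotv (H xx) v.
  by rewrite /G dotvDl dotvZl.
have ybarE u xx : dotv u (ybar k.+1 - xx) =
    (Lambda k.+1)^-1 * \sum_(j < k.+1) cc j * dotv u (y j - xx).
  exact: (@dot_avg R n u xx k.+1 cc y Lam0).
have HQ xx : Q xx -> dotv (H xx) (ybar k.+1 - xx) <= eps.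
  move=> Qxx; have [Xxx Fxx] := Qxx.
  rewrite ybarE.
  have : \sum_(j < k.+1) cc j * dotv (H xx) (y j - xx) <=
         \sum_(j < k.+1) lam j * p j * dotv (G xx) (y j - xx).
    apply: ler_sum => j _; rewrite GdotE /cc.
    have := Fxx _ (Xy j).
    have : 0 < lam j * p j by rewrite mulr_gt0.
    set f := dotv (F xx) (y j - xx); set h := dotv (H xx) (y j - xx).
    move=> hlp hf.
    have : 0 <= lam j * p j * f by rewrite mulr_ge0 // ltW.
    lra.
  have := SB xx Xxx => h1 h2.
  rewrite ler_pdivrMl //; lra.
set CH := euc_supnorm H X.
have Hbd z : X z -> normv (H z) <= normv (H x0) + LH * D.
  move=> Xz; have [_ Hz] := OD _ (XO _ Xz); have [_ Hx0] := OD _ (XO _ Xx0).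
  rewrite (_ : H z = H x0 + (H z - H x0)); last by apply/rowP => i; rewrite !mxE; ring.
  apply: le_trans (normv_triangle _ _) _.
  have := lipH _ _ Hz Hx0; have := hD _ _ Xz Xx0.
  have : 0 <= normv (z - x0) := normv_ge0 _.
  move=> h1 h2 h3.
  have : LH * normv (z - x0) <= LH * D by rewrite ler_pM2l.
  lra.
have hCH z : X z -> normv (H z) <= CH.
  by move=> Xz; apply: (supnorm_ub (M := normv (H x0) + LH * D)).
have CH0 : 0 <= CH := le_trans (normv_ge0 _) (hCH _ Xx0).
have CHD : CH * D <= D0.
  have h1 : CH * D * llam <= CH * D * ulam by rewrite ler_wpM2l ?mulr_ge0.
  move: hD0; rewrite -/CH -/D -mulrA mulrCA mulrA => h2.
  apply: le_trans h2; rewrite ler_pdivlMr // mulrC; lra.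
have FX xx : X xx -> dotv (F xx) (ybar k.+1 - xx) <= eps.
  move=> Xxx; rewrite ybarE.
  have : \sum_(j < k.+1) cc j * dotv (F xx) (y j - xx) <=
         \sum_(j < k.+1) (eta * (lam j * p j * dotv (G xx) (y j - xx)) + cc j * (eta * (CH * D))).
    apply: ler_sum => j _; rewrite GdotE /cc.
    set f := dotv (F xx) (y j - xx); set h := dotv (H xx) (y j - xx).
    have hh : - h <= CH * D.
      apply: le_trans (cauchy_schwarzN _ _) _.
      by apply: ler_pM; rewrite ?normv_ge0 ?hCH ?hD.
    have : lam j * eta * p j * eta * (- h) <= lam j * eta * p j * eta * (CH * D).
      by rewrite ler_pM2l // !mulr_gt0.
    lra.
  rewrite big_split /= -mulr_sumr -mulr_suml -/(Lambda k.+1).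
  have := SB xx Xxx => h1 h2.
  rewrite ler_pdivrMl //.
  have : eta * (\sum_(j < k.+1) lam j * p j * dotv (G xx) (y j - xx)) <= eta * (eps * Lambda k.+1).
    by rewrite ler_pM2l.
  have : Lambda k.+1 * (eta * (CH * D)) <= Lambda k.+1 * (eta * D0).
    by rewrite ler_pM2l // ler_pM2l.
  have : eta * eps <= eps / 2.
    have e2D : eta * (2 * D0) = eps by rewrite eeta; field; rewrite gt_eqF.
    have eh : eta * 2 <= 1.
      by rewrite -(ler_pM2r D00) mul1r -mulrA e2D; apply: ltW.
    have : 0 <= (1 - eta * 2) * eps by rewrite mulr_ge0 ?subr_ge0 // ltW.
    lra.
  have : eta * D0 = eps / 2 by rewrite eeta; field; rewrite gt_eqF.
  move=> e1 e2 e3 e4.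
  have : Lambda k.+1 * (eta * eps) <= Lambda k.+1 * (eps / 2) by rewrite ler_pM2l.
  nra.
have Qne : Q !=set0 by exists xs.
have Xne : X !=set0 by exists x0.
have GapHle : Gap (ybar k.+1) H Q <= eps by apply: Gap_le.
have GapFle : Gap (ybar k.+1) F X <= eps by apply: Gap_le.
have Fxs0 : 0 <= dotv (F xs) (ybar k.+1 - xs).
  rewrite ybarE; apply: mulr_ge0; first by rewrite invr_ge0 ltW.
  apply: sumr_ge0 => j _; apply: mulr_ge0; first exact: ltW.
  by have [_ h] := Qxs; apply: h.
have [Xxs _] := Qxs.
have FxsGap : dotv (F xs) (ybar k.+1 - xs) <= Gap (ybar k.+1) F X.
  exact: (Gap_ge (M := eps)).
have GapFge : 0 <= Gap (ybar k.+1) F X := le_trans Fxs0 FxsGap.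
have hBH z : Q z -> normv (H z) <= BH.
  move=> Qz; apply: (supnorm_ub (M := normv (H x0) + LH * D)) => //.
  by move=> z' [Xz' _]; apply: Hbd.
have BH0 : 0 <= BH := le_trans (normv_ge0 _) (hBH _ Qxs).
have lowH xx : Q xx -> - BH * normv (ybar k.+1 - xx) <= Gap (ybar k.+1) H Q.
  move=> Qxx; apply: le_trans (Gap_ge (M := eps) Qxx HQ).
  have := cauchy_schwarzN (H xx) (ybar k.+1 - xx).
  have : normv (H xx) * normv (ybar k.+1 - xx) <= BH * normv (ybar k.+1 - xx).
    by rewrite ler_wpM2r ?normv_ge0 ?hBH.
  lra.
have dist0 : 0 <= euc_dist (ybar k.+1) Q.
  by apply: dist_ge => // z _; exact: normv_ge0.
have lowH2 : - BH * euc_dist (ybar k.+1) Q <= Gap (ybar k.+1) H Q.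
  have [BHz|BHn] := eqVneq BH 0.
    have := lowH xs Qxs; rewrite BHz oppr0 !mul0r; by [].
  have BHp : 0 < BH by rewrite lt_def BHn BH0.
  have : - Gap (ybar k.+1) H Q / BH <= euc_dist (ybar k.+1) Q.
    apply: dist_ge => // z Qz; rewrite ler_pdivrMr //.
    have := lowH z Qz; lra.
  rewrite ler_pdivrMr // => h; lra.
have Xybar : X (ybar k.+1).
  exact: (@convex_comb R n X k cc y cvxX cc0 Xy).
split; first by split; [split | split].
move=> sigma M s0 M1 ws.
have W := ws xs (ybar k.+1) Qxs Xybar.
have dM : euc_dist (ybar k.+1) Q `^ M <= eps / sigma.
  rewrite ler_pdivlMr // mulrC; lra.
set r := M^-1.
have r0 : 0 <= r by rewrite /r invr_ge0; lra.
have dle : euc_dist (ybar k.+1) Q <= eps `^ r / sigma `^ r.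
  have M0 : 0 < M by lra.
  have e0 : 0 <= eps := ltW eps0.
  have sg0 : 0 <= sigma := ltW s0.
  have hnn1 : euc_dist (ybar k.+1) Q `^ M \in Num.nneg by rewrite nnegrE powR_ge0.
  have hnn2 : eps / sigma \in Num.nneg by rewrite nnegrE divr_ge0.
  have := ge0_ler_powR r0 hnn1 hnn2 dM.
  have -> : (euc_dist (ybar k.+1) Q `^ M) `^ r = euc_dist (ybar k.+1) Q.
    by rewrite -powRrM /r mulfV ?gt_eqF // powRr1.
  have sr : 0 < sigma `^ r by apply: powR_gt0.
  have -> : (eps / sigma) `^ r = eps `^ r / sigma `^ r.
    rewrite powRM ?invr_ge0 //; congr (_ * _).
    apply: (mulIf (lt0r_neq0 sr)); rewrite -powRM ?invr_ge0 // mulVf ?gt_eqF //.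
    by rewrite powR1 mulVf ?gt_eqF.
  by [].
apply: le_trans lowH2.
have : BH * euc_dist (ybar k.+1) Q <= BH * (eps `^ r / sigma `^ r) by rewrite ler_wpM2l.
rewrite mulrA mulNr; lra.
Qed.
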